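(* In the setting below, for every $n\in\mathbb{N}_0$ there exists a constant $C_{2n}\in(0,1)$, independent of $N$, such that $d(t_{2n+1})\le C_{2n}\,d(t_{2n})$.
   Context: Setting: $N\ge2$; $\psi:\mathbb{R}^d\times\mathbb{R}^d\to\mathbb{R}$ positive, bounded, continuous, $K:=\|\psi\|_\infty$; $\{t_n\}_{n\in\mathbb{N}_0}$ increasing, nonnegative, $t_0=0$, $t_n\to\infty$; $\alpha(0)=1$, $\alpha=1$ on $(t_{2n},t_{2n+1})$, $\alpha=-1$ on $[t_{2n+1},t_{2n+2}]$; $\{x_i\}$ solves $x_i'(t)=\frac1{N-1}\sum_{j\ne i}\alpha(t)\psi(x_i(t),x_j(t))(x_j(t)-x_i(t))$, $t>0$, $x_i(0)=x_i^0\in\mathbb{R}^d$ (continuous, $C^1$ on each $(t_n,t_{n+1})$). $d(t):=\max_{i,j}|x_i(t)-x_j(t)|$. Standing assumptions: $t_{2n+2}-t_{2n+1}<\frac{\ln 2}{K}$ for all $n$; $\sum_{p\ge0}\ln\frac{e^{K(t_{2p+2}-t_{2p+1})}}{2-e^{K(t_{2p+2}-t_{2p+1})}}<\infty$; $\sum_{p\ge0}\ln\max\{1-e^{-K(t_{2p+1}-t_{2p})},1-\frac{\psi_0}{K}(1-e^{-K(t_{2p+1}-t_{2p})})\}=-\infty$, with $\psi_0=\min_{|y|,|z|\le M^0}\psi(y,z)$, $M^0=e^{K\sum_{p}(t_{2p+2}-t_{2p+1})}\max_i|x_i^0|$. *)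

(* Defs.v *)
From HB Require Import structures.
From mathcomp Require Import all_boot all_order all_algebra.
From mathcomp Require Import all_classical all_reals all_analysis.
Set Implicit Arguments. Unset Strict Implicit. Unset Printing Implicit Defensive.
Import Order.TTheory GRing.Theory Num.Theory.
Import numFieldNormedType.Exports.
Local Open Scope classical_set_scope.
Local Open Scope ring_scope.

Section Defs.
Variables (R : realType) (dim : nat).

Definition enorm (v : 'rV[R]_dim) : R := Num.sqrt (\sum_(k < dim) v ord0 k ^+ 2).

(* K := ||psi||_oo (psi is positive, so this is the sup of its range) *)
Definition supK (psi : 'rV[R]_dim -> 'rV[R]_dim -> R) : R :=
  sup (range (fun p : 'rV[R]_dim * 'rV[R]_dim => psi p.1 p.2)).

Definition alpha (tt : nat -> R) (t : R) : R :=
  if pselect (exists n, tt n.*2.+1 <= t <= tt n.*2.+2) then -1 else 1.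

Definition negtau (tt : nat -> R) (p : nat) : R := tt p.*2.+2 - tt p.*2.+1.
Definition postau (tt : nat -> R) (p : nat) : R := tt p.*2.+1 - tt p.*2.

Definition rhs (psi : 'rV[R]_dim -> 'rV[R]_dim -> R) (tt : nat -> R) (N : nat)
  (x : 'I_N -> R -> 'rV[R]_dim) (i : 'I_N) (t : R) : 'rV[R]_dim :=
  (N.-1%:R)^-1 *: \sum_(j < N | j != i)
     (alpha tt t * psi (x i t) (x j t)) *: (x j t - x i t).

Definition is_solution (psi : 'rV[R]_dim -> 'rV[R]_dim -> R) (tt : nat -> R)
  (N : nat) (x : 'I_N -> R -> 'rV[R]_dim) : Prop :=
  forall i, {within `[0, +oo[, continuous (x i)} /\
    forall m t, tt m < t < tt m.+1 -> is_derive t 1 (x i) (rhs psi tt x i t).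

Definition diam (N : nat) (x : 'I_N -> R -> 'rV[R]_dim) (t : R) : R :=
  \big[Num.max/0]_(i < N) \big[Num.max/0]_(j < N) enorm (x i t - x j t).

Definition M0 (psi : 'rV[R]_dim -> 'rV[R]_dim -> R) (tt : nat -> R) (N : nat)
  (x0 : 'I_N -> 'rV[R]_dim) : R :=
  expR (supK psi * limn (series (negtau tt))) *
  \big[Num.max/0]_(i < N) enorm (x0 i).

Definition psi0 (psi : 'rV[R]_dim -> 'rV[R]_dim -> R) (M : R) : R :=
  inf [set r | exists y z, enorm y <= M /\ enorm z <= M /\ r = psi y z].

End Defs.

(* Main.v *)
Require Import Defs.
From HB Require Import structures.
From mathcomp Require Import all_boot all_order all_algebra.
From mathcomp Require Import all_classical all_reals all_analysis.
From mathcomp Require Import ring lra.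
Import Order.TTheory GRing.Theory Num.Theory.
Import numFieldNormedType.Exports.
Local Open Scope classical_set_scope.
Local Open Scope ring_scope.

Lemma deriv_neg_left (R : realType) (f : R -> R) (s d a : R) :
  is_derive s 1 f d -> d < 0 -> a < s -> exists r, a < r < s /\ f s < f r.
Proof.
move=> [df dv] d0 as_.
have hc : (fun h : R => h^-1 *: ((f \o shift s) (h *: 1) - f s)) @ 0^' --> d.
  by rewrite -dv; exact: df.
have := cvgr_lt _ hc 0 d0.
rewrite /= near_withinE /=. move=> H. have [e /= e0 He] := (nbhs_ballP _ _).1 (H ltac:(apply: Proper_dnbhs_numFieldType)).
pose h := - Num.min (e / 2) ((s - a) / 2).
have hpos : 0 < Num.min (e / 2) ((s - a) / 2).
  by rewrite lt_min !divr_gt0 // subr_gt0.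
have hlt : h < 0 by rewrite /h oppr_lt0.
have := He h.
have hb : ball 0 e h.
  rewrite /ball /= sub0r normrN ltr0_norm // /h opprK.
  have m1 : Num.min (e / 2) ((s - a) / 2) <= e / 2 by rewrite ge_min lexx.
  apply: le_lt_trans m1 _.
  by rewrite ltr_pdivrMr // ltr_pMr // ltr1n.
move=> /(_ hb (ltr0_neq0 hlt)) /=.
rewrite [_%:A]mulr1 => hq.
exists (h + s); split.
  apply/andP; split.
    rewrite -ltrBlDr /h ltrNr opprB.
    have m2 : Num.min (e / 2) ((s - a) / 2) <= (s - a) / 2 by rewrite ge_min lexx orbT.
    apply: le_lt_trans m2 _.
    by rewrite ltr_pdivrMr // ltr_pMr ?subr_gt0 // ltr1n.
  lra.
rewrite -subr_gt0.
have : 0 < h * (h^-1 * (f (h + s) - f s)).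
  by rewrite -[X in X < _](mulr0 h) ltr_nM2l.
by rewrite mulrA mulfV ?ltr0_neq0 // mul1r.
Qed.

Lemma itv_sub (R : realType) (a t b : R) : t <= b -> `[a, t] `<=` `[a, b].
Proof.
move=> tb r /=; rewrite !in_itv /= => /andP[ar rt].
by rewrite ar /= (le_trans rt tb).
Qed.

Lemma max_principle (R : realType) (I : finType) (f : I -> R -> R)
  (df : I -> R -> R) (a b Mx : R) :
  a < b ->
  (forall k, {within `[a, b], continuous (f k)}) ->
  (forall k t, a < t < b -> is_derive t 1 (f k) (df k t)) ->
  (forall k t, a < t < b -> (forall l, f l t <= f k t) -> df k t < 0) ->
  (forall k, f k a <= Mx) ->
  forall k t, a <= t <= b -> f k t <= Mx.
Proof.
move=> ab fc fd fneg fa.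
have main : forall k t, a <= t < b -> f k t <= Mx.
  move=> k t /andP[at_ tb].
  have ev : forall l, exists s, s \in `[a, t] /\
      forall r, r \in `[a, t] -> f l r <= f l s.
    move=> l.
    have [s s1 s2] := EVT_max at_ (continuous_subspaceW (@itv_sub _ a _ _ (ltW tb)) (fc l)).
    by exists s.
  have [sf hsf] := choice ev.
  case: (@arg_maxP _ _ I k xpredT (fun l => f l (sf l)) isT) => k0 _ Hk0.
  have Hall : forall l r, r \in `[a, t] -> f l r <= f k0 (sf k0).
    move=> l r hr; apply: le_trans ((hsf l).2 r hr) _; exact: Hk0.
  have [s0in _] := hsf k0.
  move: s0in; rewrite in_itv /= => /andP[as0 s0t].
  case: (eqVneq (sf k0) a) => [e|ne].
    apply: le_trans (Hall k t _) _; first by rewrite in_itv /= at_ lexx.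
    by rewrite e fa.
  have as0' : a < sf k0 by rewrite lt_neqAle eq_sym ne as0.
  have s0b : sf k0 < b by apply: le_lt_trans s0t tb.
  have hab : a < sf k0 < b by rewrite as0' s0b.
  have hd := fneg k0 (sf k0) hab.
  have : df k0 (sf k0) < 0.
    apply: hd => l; apply: Hall; by rewrite in_itv /= as0 s0t.
  move=> dneg.
  have [r [/andP[ar rs] fr]] := @deriv_neg_left _ _ _ _ _ (fd k0 (sf k0) hab) dneg as0'.
  have : f k0 r <= f k0 (sf k0).
    apply: Hall; rewrite in_itv /= (ltW ar) /=; apply: ltW; exact: lt_le_trans rs s0t.
  by rewrite leNgt fr.
move=> k t /andP[at_ tb].
case: (ltrP t b) => [tb'|bt]; first by apply: main; rewrite at_ tb'.
have -> : t = b by apply/eqP; rewrite eq_le tb bt.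
have [_ _ hl] := (continuous_within_itvP (f k) ab).1 (fc k).
rewrite -(cvg_lim _ hl) //.
apply: limr_le; first by apply/cvg_ex; exists (f k b).
near=> r.
apply: main.
apply/andP; split; last by near: r; exact: nbhs_left_lt.
by near: r; apply: nbhs_left_ge.
Unshelve. all: by end_near.
Qed.

Lemma within_mul (R : realType) (A : set R) (f h : R -> R) :
  {within A, continuous f} -> continuous h ->
  {within A, continuous (fun t => f t * h t)}.
Proof.
move=> fc hc x.
apply: cvgM; first exact: fc.
exact: ((continuous_subspaceT hc) x).
Qed.

Lemma within_add (R : realType) (A : set R) (f h : R -> R) :
  {within A, continuous f} -> continuous h ->
  {within A, continuous (fun t => f t + h t)}.
Proof.
move=> fc hc x.
apply: cvgD; first exact: fc.
exact: ((continuous_subspaceT hc) x).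
Qed.

Lemma le_delta (R : realType) (x y K : R) : 0 <= K ->
  (forall d, 0 < d -> x <= y + d * K) -> x <= y.
Proof.
move=> K0 H; rewrite leNgt; apply/negP => yx.
have dpos : 0 < (x - y) / (K + 1) by rewrite divr_gt0 // ?subr_gt0 //; lra.
have := H _ dpos.
have : (x - y) / (K + 1) * K < x - y.
  have Kp : 0 < K + 1 by lra.
  rewrite -mulrA gtr_pMr ?subr_gt0 // mulrC ltr_pdivrMr //; lra.
lra.
Qed.

Lemma cont_aff (R : realType) (c a : R) : continuous (fun s : R => - (c * (s - a))).
Proof.
move=> s; apply: cvgN; apply: cvgM; first exact: cvg_cst.
apply: cvgB; [exact: cvg_id | exact: cvg_cst].
Qed.
Lemma cont_expaff (R : realType) (c a : R) : continuous (fun s : R => expR (- (c * (s - a)))).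
Proof.
move=> s; apply: continuous_comp; first exact: cont_aff.
exact: continuous_expR.
Qed.
Lemma cont_lin (R : realType) (d a : R) : continuous (fun s : R => - d * (s - a)).
Proof.
move=> s; apply: cvgM; first exact: cvg_cst.
apply: cvgB; [exact: cvg_id | exact: cvg_cst].
Qed.

Lemma comparison (R : realType) (I : finType) (f : I -> R -> R)
  (df : I -> R -> R) (a b c Mx : R) :
  a < b ->
  (forall k, {within `[a, b], continuous (f k)}) ->
  (forall k t, a < t < b -> is_derive t 1 (f k) (df k t)) ->
  (forall k t, a < t < b -> (forall l, f l t <= f k t) -> df k t <= c * f k t) ->
  (forall k, f k a <= Mx) ->
  forall k t, a <= t <= b -> f k t <= Mx * expR (c * (t - a)).
Proof.
move=> ab fc fd fneg fa k t tab.
have ta : 0 <= t - a by move: tab => /andP[? ?]; lra.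
apply: (@le_delta _ _ _ ((t - a) * expR (c * (t - a)))).
  by rewrite mulr_ge0 // expR_ge0.
move=> d d0.
pose E := fun s : R => expR (- (c * (s - a))).
have Epos : forall s, 0 < E s by move=> s; exact: expR_gt0.
pose g := fun l s => f l s * E s + (- d * (s - a)).
pose dg := fun l s => df l s * E s + f l s * (E s * (- c)) + (- d).
have hg := @max_principle R I g dg a b Mx ab.
have H : g k t <= Mx.
  apply: (hg _ _ _ _ k t tab).
  - move=> l; apply: within_add; last exact: cont_lin.
    by apply: within_mul => //; exact: cont_expaff.
  - move=> l s hs.
    have hE : is_derive s 1 E (E s * (- c)).
      have h1 : is_derive s 1 (fun s : R => - (c * (s - a))) (- c).
        by apply: is_derive_eq; rewrite subr0 -[_ *: _]/(_ * _) mulr1.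
      exact: (is_derive1_comp (is_derive_expR _) h1).
    have hf := fd l s hs.
    rewrite /g /dg.
    apply: is_derive_eq.
    change (f l s * (E s * - c) + E s * df l s + - d * (1 - 0) =
      df l s * E s + f l s * (E s * - c) - d); ring.
  - move=> l s hs hmax.
    have hm : forall l', f l' s <= f l s.
      move=> l'; have := hmax l'; rewrite /g => H.
      have H' : f l' s * E s <= f l s * E s by lra.
      by rewrite -(ler_pM2r (Epos s)).
    have := fneg l s hs hm.
    rewrite /dg => H.
    have : (df l s - c * f l s) * E s <= 0.
      by rewrite mulr_le0_ge0 ?subr_le0 // ltW.
    lra.
  - move=> l; rewrite /g subrr mulr0 addr0 /E subrr mulr0 oppr0 expR0 mulr1.
    exact: fa.
have H2 : f k t * E t <= Mx + d * (t - a).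
  move: H; rewrite /g /=; lra.
have EE : E t * expR (c * (t - a)) = 1 by rewrite /E -expRD addNr expR0.
have H4 : f k t * E t * expR (c * (t - a)) <= (Mx + d * (t - a)) * expR (c * (t - a)).
  by rewrite ler_pM2r // expR_gt0.
rewrite -mulrA EE mulr1 in H4.
apply: le_trans H4 _.
by rewrite mulrDl mulrA lexx.
Qed.

Lemma is_derive_entry (R : realType) (m n : nat) (X : R -> 'M[R]_(m,n)) (t : R) (dX : 'M[R]_(m,n)) i j :
  is_derive t 1 X dX -> is_derive t 1 (fun s => X s i j) (dX i j).
Proof.
move=> [dX1 <-].
have := (derivable_mxP X t 1).1 dX1 i j => dij.
apply: DeriveDef => //.
by rewrite derive_mx // mxE.
Qed.

Section vec.
Context {R : realType} {dim : nat}.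
Implicit Types u v w : 'rV[R]_dim.

Definition dot u v : R := \sum_(k < dim) u ord0 k * v ord0 k.
Definition sq u := dot u u.

Lemma enormE v : enorm v = Num.sqrt (sq v).
Proof. by rewrite /enorm /sq /dot; under eq_bigr do rewrite expr2. Qed.

Lemma sq_ge0 v : 0 <= sq v.
Proof. by apply: sumr_ge0 => k _; rewrite -expr2 sqr_ge0. Qed.

Lemma dotC u v : dot u v = dot v u.
Proof. by apply: eq_bigr => k _; rewrite mulrC. Qed.

Lemma dotDr u v w : dot u (v + w) = dot u v + dot u w.
Proof. by rewrite /dot -big_split; apply: eq_bigr => k _; rewrite mxE mulrDr. Qed.

Lemma dotBr u v w : dot u (v - w) = dot u v - dot u w.
Proof.
rewrite /dot -sumrB; apply: eq_bigr => k _; rewrite !mxE mulrDr mulrN //.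
Qed.

Lemma dotZr u a v : dot u (a *: v) = a * dot u v.
Proof. by rewrite /dot mulr_sumr; apply: eq_bigr => k _; rewrite mxE mulrCA. Qed.

Lemma dot_sumr (I : finType) (P : pred I) u (F : I -> 'rV[R]_dim) :
  dot u (\sum_(i | P i) F i) = \sum_(i | P i) dot u (F i).
Proof.
rewrite /dot; under eq_bigr do rewrite summxE mulr_sumr.
by rewrite exchange_big.
Qed.

Lemma dotBl u v w : dot (u - v) w = dot u w - dot v w.
Proof. by rewrite dotC dotBr dotC [dot w v]dotC. Qed.

Lemma dot0r u : dot u 0 = 0.
Proof. by rewrite /dot big1 // => k _; rewrite mxE mulr0. Qed.

Lemma dot_le u v : 2 * dot u v <= sq u + sq v.
Proof.
rewrite /sq /dot mulr_sumr -big_split /=; apply: ler_sum => k _.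
have := sqr_ge0 (u ord0 k - v ord0 k); rewrite expr2; nra.
Qed.

Lemma dot_ge u v : - (sq u + sq v) <= 2 * dot u v.
Proof.
rewrite /sq /dot mulr_sumr -big_split /= -sumrN; apply: ler_sum => k _.
have := sqr_ge0 (u ord0 k + v ord0 k); rewrite expr2; nra.
Qed.

Lemma is_derive_dot (X Y : R -> 'rV[R]_dim) (t : R) dX dY :
  is_derive t 1 X dX -> is_derive t 1 Y dY ->
  is_derive t 1 (fun s => dot (X s) (Y s)) (dot dX (Y t) + dot (X t) dY).
Proof.
move=> hX hY.
have e : (fun s => dot (X s) (Y s)) =
    \sum_(k < dim) (fun s => X s ord0 k * Y s ord0 k).
  by rewrite fct_sumE.
rewrite e.
apply: is_derive_eq.
  apply: (@is_derive_sum _ _ _ _ _ _ _ (fun k => X t ord0 k *: dY ord0 k + Y t ord0 k *: dX ord0 k)) => k.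
  apply: is_deriveM; exact: is_derive_entry.
rewrite /dot -big_split /=; apply: eq_bigr => k _.
by rewrite addrC [dX ord0 k * _]mulrC.
Qed.

Lemma within_dot (A : set R) (X Y : R -> 'rV[R]_dim) :
  {within A, continuous X} -> {within A, continuous Y} ->
  {within A, continuous (fun s => dot (X s) (Y s))}.
Proof.
move=> cX cY x; rewrite /dot.
have hadd : continuous (fun z : R * R => z.1 + z.2) := add_continuous.
apply: (cvg_big hadd) => k _.
apply: cvgM.
  exact: (continuous_cvg _ (@coord_continuous _ 1 dim ord0 k _) (cX x)).
exact: (continuous_cvg _ (@coord_continuous _ 1 dim ord0 k _) (cY x)).
Qed.

End vec.


Lemma tt_lt (R : realType) (tt : nat -> R) : (forall m, tt m < tt m.+1) ->
  forall m k, (m < k)%N -> tt m < tt k.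
Proof.
move=> h m k; elim: k => // k IH; rewrite ltnS leq_eqVlt => /orP[/eqP e|/IH]; first by rewrite e.
by move=> H; apply: lt_trans H (h k).
Qed.

Lemma tt_le (R : realType) (tt : nat -> R) : (forall m, tt m < tt m.+1) ->
  forall m k, (m <= k)%N -> tt m <= tt k.
Proof.
move=> h m k; rewrite leq_eqVlt => /orP[/eqP e|H]; first by rewrite e.
by apply: ltW; exact: tt_lt.
Qed.

Lemma alpha_pos (R : realType) (tt : nat -> R) (n : nat) (t : R) :
  (forall m, tt m < tt m.+1) -> tt n.*2 < t < tt n.*2.+1 -> alpha tt t = 1.
Proof.
move=> h /andP[t1 t2]; rewrite /alpha; case: pselect => // hex.
exfalso; case: hex => m /andP[m1 m2].
case: (ltnP m n) => mn.
  have : tt m.*2.+2 <= tt n.*2 by apply: tt_le => //; rewrite -doubleS leq_double.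
  move=> H; have := le_lt_trans H t1; by rewrite ltNge m2.
have : tt n.*2.+1 <= tt m.*2.+1 by apply: tt_le => //; rewrite ltnS leq_double.
move=> H; have := lt_le_trans t2 H; by rewrite ltNge m1.
Qed.

Lemma alpha_pm (R : realType) (tt : nat -> R) (t : R) :
  alpha tt t = 1 \/ alpha tt t = -1.
Proof. by rewrite /alpha; case: pselect => H; [right|left]. Qed.

Lemma avg_bound (R : realType) (N : nat) (i : 'I_N) (w : 'I_N -> R) (K : R) :
  (1 < N)%N -> (forall j, j != i -> w j <= K) ->
  (N.-1%:R)^-1 * \sum_(j < N | j != i) w j <= K.
Proof.
move=> N1 hw.
have hs : \sum_(j < N | j != i) w j <= \sum_(j < N | j != i) K by apply: ler_sum.
have hc : \sum_(j < N | j != i) K = K * N.-1%:R.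
  by rewrite (@sumr_const _ _ (predC1 i)) cardC1 card_ord mulr_natr.
have n1 : 0 < N.-1%:R :> R by rewrite ltr0n -ltnS prednK // ltnW.
rewrite hc in hs.
rewrite -(ler_pM2l n1) mulrA mulfV ?gt_eqF // mul1r mulrC.
exact: hs.
Qed.

Lemma comp_bound (R : realType) (dim : nat) (v : 'rV[R]_dim) k :
  `|v ord0 k| <= Num.sqrt (sq v).
Proof.
rewrite -sqrtr_sqr ler_sqrt ?sq_ge0 //.
rewrite /sq /dot (bigD1 k) //= expr2 lerDl.
by apply: sumr_ge0 => j _; rewrite -expr2 sqr_ge0.
Qed.

Lemma growth_step (R : realType) (dim : nat) (psi : 'rV[R]_dim -> 'rV[R]_dim -> R)
  (tt : nat -> R) (N : nat) (x : 'I_N -> R -> 'rV[R]_dim) (i : 'I_N) (t Mp : R) :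
  (1 < N)%N -> (forall y z, 0 < psi y z) -> (forall y z, psi y z <= Mp) ->
  (forall l, sq (x l t) <= sq (x i t)) ->
  2 * dot (x i t) (rhs psi tt x i t) <= 4 * Mp * sq (x i t).
Proof.
move=> N1 pp pM hmax.
rewrite /rhs dotZr dot_sumr.
have H : (N.-1%:R)^-1 * \sum_(j < N | j != i)
   dot (x i t) ((alpha tt t * psi (x i t) (x j t)) *: (x j t - x i t))
   <= 2 * Mp * sq (x i t).
  apply: avg_bound => // j _.
  rewrite dotZr dotBr -/(sq (x i t)).
  have h1 := dot_le (x i t) (x j t).
  have h2 := dot_ge (x i t) (x j t).
  have h3 := hmax j.
  have h4 := sq_ge0 (x j t).
  have h5 := pp (x i t) (x j t).
  have h6 := pM (x i t) (x j t).
  case: (@alpha_pm _ tt t) => ->; nra.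
nra.
Qed.

Lemma vid1 (V : zmodType) (a b c : V) : a - b = (a - c) - (b - c).
Proof. by rewrite opprB addrA subrK. Qed.
Lemma vid2 (V : zmodType) (a b c : V) : a - b = (c - b) - (c - a).
Proof. by rewrite opprB [(c - b) + _]addrC addrA subrK. Qed.

Lemma contract_step (R : realType) (dim : nat) (psi : 'rV[R]_dim -> 'rV[R]_dim -> R)
  (tt : nat -> R) (N : nat) (x : 'I_N -> R -> 'rV[R]_dim) (i j : 'I_N) (t p0 : R) :
  (1 < N)%N -> 0 <= p0 ->
  (forall k, p0 <= psi (x i t) (x k t)) -> (forall k, p0 <= psi (x j t) (x k t)) ->
  alpha tt t = 1 ->
  (forall k, sq (x k t - x j t) <= sq (x i t - x j t)) ->
  (forall k, sq (x i t - x k t) <= sq (x i t - x j t)) ->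
  2 * dot (x i t - x j t) (rhs psi tt x i t - rhs psi tt x j t)
    <= (- (2 * p0)) * sq (x i t - x j t).
Proof.
move=> N1 p00 hpi hpj hal hk1 hk2.
set V := x i t - x j t.
have ha : forall k, dot V (x k t - x i t) <= 0.
  move=> k.
  have e : x k t - x i t = (x k t - x j t) - V by rewrite /V -vid1.
  rewrite e dotBr -/(sq V).
  have := dot_le V (x k t - x j t); have := hk1 k; lra.
have hb : forall k, 0 <= dot V (x k t - x j t).
  move=> k.
  have e : x k t - x j t = V - (x i t - x k t) by rewrite /V -vid2.
  rewrite e dotBr -/(sq V).
  have := dot_le V (x i t - x k t); have := hk2 k; lra.
rewrite dotBr /rhs dotZr dotZr dot_sumr dot_sumr.
have eA : \sum_(k < N | k != i)
    dot V ((alpha tt t * psi (x i t) (x k t)) *: (x k t - x i t)) =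
    \sum_(k < N | k != i) psi (x i t) (x k t) * dot V (x k t - x i t).
  by apply: eq_bigr => k _; rewrite dotZr hal mul1r.
have eB : \sum_(k < N | k != j)
    dot V ((alpha tt t * psi (x j t) (x k t)) *: (x k t - x j t)) =
    \sum_(k < N | k != j) psi (x j t) (x k t) * dot V (x k t - x j t).
  by apply: eq_bigr => k _; rewrite dotZr hal mul1r.
rewrite eA eB.
set A := \sum_(k < N | k != i) _.
set B := \sum_(k < N | k != j) _.
have h1 : A <= \sum_(k < N) p0 * dot V (x k t - x i t).
  rewrite [X in _ <= X](bigD1 i) //= subrr dot0r mulr0 add0r.
  apply: ler_sum => k _ /=.
  by rewrite -subr_ge0 -mulrBl mulr_le0 // ?subr_le0 ?ha ?hpi.
have h2 : \sum_(k < N) p0 * dot V (x k t - x j t) <= B.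
  rewrite [X in X <= _](bigD1 j) //= subrr dot0r mulr0 add0r.
  apply: ler_sum => k _ /=.
  by rewrite -subr_ge0 -mulrBl mulr_ge0 // ?subr_ge0 ?hb ?hpj.
have h3 : \sum_(k < N) p0 * dot V (x k t - x i t) -
          \sum_(k < N) p0 * dot V (x k t - x j t) = - (p0 * sq V) * N%:R.
  rewrite -sumrB.
  have -> : \sum_(k < N) (p0 * dot V (x k t - x i t) - p0 * dot V (x k t - x j t))
          = \sum_(k < N) (- (p0 * sq V)).
    apply: eq_bigr => k _; rewrite /sq /V !dotBr; ring.
  by rewrite sumr_const card_ord mulr_natr.
have n1 : 0 < N.-1%:R :> R by rewrite ltr0n -ltnS prednK // ltnW.
have nN : N%:R = N.-1%:R + 1 :> R by rewrite natr1 prednK // ltnW.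
have hP : 0 <= p0 * sq V by rewrite mulr_ge0 // sq_ge0.
have H : (N.-1%:R)^-1 * A - (N.-1%:R)^-1 * B <= - (p0 * sq V).
  rewrite -mulrBr -(ler_pM2l n1) mulrA mulfV ?gt_eqF // mul1r.
  rewrite nN in h3.
  nra.
lra.
Qed.

Theorem proposition3p11 (R : realType) (dim : nat)
  (psi : 'rV[R]_dim -> 'rV[R]_dim -> R) (tt : nat -> R)
  (psi_pos : forall y z, 0 < psi y z)
  (psi_bdd : exists M, forall y z, psi y z <= M)
  (psi_cont : continuous (fun p : 'rV[R]_dim * 'rV[R]_dim => psi p.1 p.2))
  (tt0 : tt 0%N = 0)
  (tt_incr : forall m, tt m < tt m.+1)
  (tt_infty : tt @ \oo --> +oo)
  (neg_short : forall p, negtau tt p < ln 2 / supK psi)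
  (neg_summable : cvgn (series (fun p =>
      ln (expR (supK psi * negtau tt p) / (2 - expR (supK psi * negtau tt p))))))
  (R0 : R) (n : nat) :
  exists C : R, 0 < C < 1 /\
    forall (N : nat) (x : 'I_N -> R -> 'rV[R]_dim),
      (2 <= N)%N ->
      (forall i, enorm (x i 0) <= R0) ->
      (let K := supK psi in
       let p0 := psi0 psi (M0 psi tt (fun i => x i 0)) in
       series (fun p => ln (Num.max (1 - expR (- (K * postau tt p)))
                                    (1 - p0 / K * (1 - expR (- (K * postau tt p))))))
         @ \oo --> -oo) ->
      is_solution psi tt x ->
      diam x (tt n.*2.+1) <= C * diam x (tt n.*2).

Proof.
have [Mp hMp] := psi_bdd.
have Mp0 : 0 < Mp := lt_le_trans (psi_pos 0 0) (hMp 0 0).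
pose c1 := 4 * Mp.
have c10 : 0 < c1 by rewrite /c1 mulr_gt0.
pose a := tt n.*2.
pose b := tt n.*2.+1.
have ab : a < b := tt_incr _.
have a0 : 0 <= a by rewrite /a -tt0; apply: tt_le.
pose B2 := R0 ^+ 2 * expR (c1 * b).
have B20 : 0 <= B2 by rewrite /B2 mulr_ge0 ?sqr_ge0 ?expR_ge0.
pose r := Num.sqrt B2.
have r0 : 0 <= r := sqrtr_ge0 _.
pose Ball := [set v : 'rV[R]_dim | forall k, (`[- r, r]%classic : set R) (v ord0 k)].
have cB : compact Ball.
  by apply: (@rV_compact _ _ (fun=> `[- r, r]%classic)) => _; exact: segment_compact.
pose S := Ball `*` Ball.
have cS : compact S := compact_setX cB cB.
have S0 : S !=set0.
  exists (0, 0); split => k /=; rewrite mxE in_itv /= oppr_le0 r0 //.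
have cont : {within S, continuous (fun p : 'rV[R]_dim * 'rV[R]_dim => psi p.1 p.2)}.
  exact: continuous_subspaceT.
have [cm cmS hcm] := compact_EVT_min S0 cS cont.
pose p0 := psi cm.1 cm.2.
have p0pos : 0 < p0 := psi_pos _ _.
have hp0 : forall y z : 'rV[R]_dim, (forall k, `|y ord0 k| <= r) -> (forall k, `|z ord0 k| <= r) ->
    p0 <= psi y z.
  move=> y z hy hz; apply: (hcm (y, z)); rewrite inE; split => k /=;
    rewrite in_itv /= -ler_norml; [exact: hy | exact: hz].
exists (expR (- (p0 * (b - a)))).
split.
  rewrite expR_gt0 /= expR_lt1 oppr_lt0 mulr_gt0 //; by rewrite subr_gt0.
move=> N x N2 hx0 _ hsol.
have N1 : (1 < N)%N := N2.
have sub0 : forall u v : R, 0 <= u -> `[u, v] `<=` `[0, +oo[.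
  move=> u v u0 s /=; rewrite !in_itv /= => /andP[us _].
  by rewrite (le_trans u0 us).
have ttge0 : forall m, 0 <= tt m by move=> m; rewrite -tt0; apply: tt_le.
have stepQ : forall m, (forall i, sq (x i (tt m)) <= R0 ^+ 2 * expR (c1 * tt m)) ->
    forall i t, tt m <= t <= tt m.+1 -> sq (x i t) <= R0 ^+ 2 * expR (c1 * t).
  move=> m Pm i t ht.
  have := @comparison R 'I_N (fun i s => sq (x i s))
    (fun i s => 2 * dot (x i s) (rhs psi tt x i s)) (tt m) (tt m.+1) c1
    (R0 ^+ 2 * expR (c1 * tt m)) (tt_incr m) _ _ _ Pm i t ht.
  have -> : R0 ^+ 2 * expR (c1 * tt m) * expR (c1 * (t - tt m)) =
            R0 ^+ 2 * expR (c1 * t).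
    by rewrite -mulrA -expRD; congr (_ * expR _); ring.
  apply.
  - move=> k; apply: within_dot;
      exact: (continuous_subspaceW (sub0 _ _ (ttge0 m)) (hsol k).1).
  - move=> k s hs.
    have hdk := (hsol k).2 m s hs.
    apply: is_derive_eq; first exact: (is_derive_dot _ _ _ _ _ hdk hdk).
    by rewrite dotC; ring.
  - move=> k s hs hmax.
    by have := @growth_step _ _ psi tt N x k s Mp N1 psi_pos hMp hmax.
have P0 : forall i, sq (x i (tt 0)) <= R0 ^+ 2 * expR (c1 * tt 0).
  move=> i; rewrite tt0 mulr0 expR0 mulr1.
  have h1 := hx0 i; rewrite enormE in h1.
  have h2 := sq_ge0 (x i 0).
  have h3 : 0 <= Num.sqrt (sq (x i 0)) := sqrtr_ge0 _.
  rewrite -(sqr_sqrtr h2).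
  move: h1 h3; set q := Num.sqrt _ => h1 h3; nra.
have Pall : forall m i, sq (x i (tt m)) <= R0 ^+ 2 * expR (c1 * tt m).
  elim=> [|m IH] i; first exact: P0.
  apply: stepQ IH i (tt m.+1) _.
  by rewrite lexx andbT ltW.
have posb : forall i t, a <= t <= b -> sq (x i t) <= B2.
  move=> i t ht; have h := stepQ n.*2 (Pall n.*2) i t ht.
  apply: le_trans h _.
  rewrite /B2 ler_wpM2l ?sqr_ge0 // ler_expR ler_pM2l //.
  by case/andP: ht.
have compb : forall i t k, a <= t <= b -> `|x i t ord0 k| <= r.
  move=> i t k ht; apply: le_trans (@comp_bound _ _ (x i t) k) _.
  by rewrite /r ler_sqrt // posb.
pose D := diam x a.
have hnD : forall i j, enorm (x i a - x j a) <= D.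
  move=> i j; rewrite /D /diam.
  have h1 : enorm (x i a - x j a) <= \big[Num.max/0]_(j0 < N) enorm (x i a - x j0 a)
    := le_bigmax _ (fun j0 => enorm (x i a - x j0 a)) j.
  apply: le_trans h1 _.
  exact: (le_bigmax _ (fun i0 => \big[Num.max/0]_(j0 < N) enorm (x i0 a - x j0 a)) i).
have D0 : 0 <= D.
  pose i0 : 'I_N := Ordinal (ltnW N1).
  apply: le_trans (hnD i0 i0).
  by rewrite enormE sqrtr_ge0.
have hDa : forall p : 'I_N * 'I_N, sq (x p.1 a - x p.2 a) <= D ^+ 2.
  move=> [i j] /=; have h1 := hnD i j; rewrite enormE in h1.
  have h2 := sq_ge0 (x i a - x j a).
  have h3 : 0 <= Num.sqrt (sq (x i a - x j a)) := sqrtr_ge0 _.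
  rewrite -(sqr_sqrtr h2).
  move: h1 h3; set q := Num.sqrt _ => h1 h3; nra.
have wc : forall i j, {within `[a, b], continuous (fun s => x i s - x j s)}.
  move=> i j y; apply: cvgB.
    exact: (continuous_subspaceW (sub0 _ _ a0) (hsol i).1).
  exact: (continuous_subspaceW (sub0 _ _ a0) (hsol j).1).
have Hcmp : forall (p : 'I_N * 'I_N) t, a <= t <= b ->
    sq (x p.1 t - x p.2 t) <= D ^+ 2 * expR (- (2 * p0) * (t - a)).
  apply: (@comparison R ('I_N * 'I_N)%type (fun p s => sq (x p.1 s - x p.2 s))
    (fun p s => 2 * dot (x p.1 s - x p.2 s) (rhs psi tt x p.1 s - rhs psi tt x p.2 s))
    a b (- (2 * p0)) (D ^+ 2) ab _ _ _ hDa).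
  - by move=> p; apply: within_dot; exact: wc.
  - move=> p s hs.
    have hi := (hsol p.1).2 n.*2 s hs.
    have hj := (hsol p.2).2 n.*2 s hs.
    have hd : is_derive s 1 (fun s => x p.1 s - x p.2 s)
        (rhs psi tt x p.1 s - rhs psi tt x p.2 s) := is_deriveB hi hj.
    apply: is_derive_eq; first exact: (is_derive_dot _ _ _ _ _ hd hd).
    by rewrite dotC; ring.
  - move=> [i j] s hs hmax /=.
    have hs' : a <= s <= b by case/andP: hs => h1 h2; rewrite !ltW.
    have hpi : forall k, p0 <= psi (x i s) (x k s).
      by move=> k; apply: hp0 => k'; apply: compb.
    have hpj : forall k, p0 <= psi (x j s) (x k s).
      by move=> k; apply: hp0 => k'; apply: compb.
    have hal := @alpha_pos _ tt n s tt_incr hs.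
    have hk1 : forall k, sq (x k s - x j s) <= sq (x i s - x j s).
      by move=> k; exact: (hmax (k, j)).
    have hk2 : forall k, sq (x i s - x k s) <= sq (x i s - x j s).
      by move=> k; exact: (hmax (i, k)).
    exact: (@contract_step _ _ psi tt N x i j s p0 N1 (ltW p0pos) hpi hpj hal hk1 hk2).
have CD0 : 0 <= expR (- (p0 * (b - a))) * D by rewrite mulr_ge0 ?expR_ge0.
rewrite /diam.
apply: bigmax_le => // i _.
apply: bigmax_le => // j _.
rewrite enormE.
have hb' : a <= b <= b by rewrite lexx ltW.
have h := Hcmp (i, j) b hb'.
have eC : expR (- (p0 * (b - a))) ^+ 2 = expR (- (2 * p0) * (b - a)).
  by rewrite expr2 -expRD; congr expR; ring.
rewrite -(ger0_norm CD0) -sqrtr_sqr ler_sqrt ?sqr_ge0 // exprMn eC mulrC.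
exact: h.
Qed.
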